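(* Let $G$ be a subcubic graph with $\mathrm{mad}(G)<\frac{20}{9}$ that has no good coloring, chosen with $|V(G)|+|E(G)|$ minimum among all such graphs. Then $G$ contains no $4$-thread, i.e. no path on four vertices all of which have degree $2$ in $G$.
   Context: Graphs are simple; subcubic means maximum degree at most $3$; $\mathrm{mad}(G)=\max\{2|E(H)|/|V(H)|: H\subseteq G\}$. A $k$-thread is a path on $k$ vertices each of degree $2$ in $G$. A $(1^2,2^2)$-packing edge-coloring is an assignment of colors $1_a,1_b,2_a,2_b$ to the edges such that each of the color classes $1_a,1_b$ is a matching and each of $2_a,2_b$ is an induced matching (any two edges of that color are at distance at least $3$ in the line graph). A good coloring is a $(1^2,2^2)$-packing edge-coloring that additionally satisfies: (I) an edge colored $2_a$ and an edge colored $2_b$ never share an endpoint; (II) if $e_1=u_1u_2$ and $e_2=v_1v_2$ share no endpoint and are colored $2_a$ and $2_b$ respectively, then there is no vertex $w$ such that $u_iwv_j$ is a path in $G$ for some $i,j\in\{1,2\}$. *)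

(* Defs.v *)
From HB Require Import structures.
From mathcomp Require Import all_boot all_order all_algebra.
Set Implicit Arguments. Unset Strict Implicit. Unset Printing Implicit Defensive.
Import Order.TTheory GRing.Theory Num.Theory.

Section Graphs.
Variable T : finType.
Variable e : rel T.

Definition simple_graph : Prop := symmetric e /\ irreflexive e.

Definition edges : {set {set T}} := [set f : {set T} | [exists x, exists y, e x y && (f == [set x; y])]].

Definition deg (x : T) : nat := #|[set y | e x y]|.

Definition subcubic : Prop := forall x, deg x <= 3.

(* maximum average degree: max over subgraphs H=(S,F) of 2|F|/|S|
   (the empty subgraph contributes 0, as x/0 = 0 in rat) *)
Definition mad : rat :=
  \big[Num.max/0%R]_(S : {set T})
    \big[Num.max/0%R]_(F : {set {set T}} | F \subset edges :&: [set f : {set T} | f \subset S])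
       (((2 * #|F|)%:R : rat) / (#|S|%:R))%R.

Definition share (f g : {set T}) : Prop := exists x, x \in f /\ x \in g.

Definition joined (f g : {set T}) : Prop :=
  exists u v, [/\ u \in f, v \in g & e u v].

Definition common_nbr (f g : {set T}) : Prop :=
  exists u v w, [/\ u \in f, v \in g, e u w & e w v].

End Graphs.

Inductive color := C1a | C1b | C2a | C2b.

Section Coloring.
Variable T : finType.
Variable e : rel T.
Variable c : {set T} -> color.

Definition matching_class (k : color) : Prop :=
  forall f g, f \in edges e -> g \in edges e -> f != g ->
    c f = k -> c g = k -> ~ share f g.

Definition induced_matching_class (k : color) : Prop :=
  forall f g, f \in edges e -> g \in edges e -> f != g ->
    c f = k -> c g = k -> ~ share f g /\ ~ joined e f g.

Definition packing_coloring : Prop :=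
  [/\ matching_class C1a, matching_class C1b,
      induced_matching_class C2a & induced_matching_class C2b].

Definition good_coloring : Prop :=
  [/\ packing_coloring,
      (forall f g, f \in edges e -> g \in edges e ->
         c f = C2a -> c g = C2b -> ~ share f g)
    &
      (forall f g, f \in edges e -> g \in edges e ->
         c f = C2a -> c g = C2b -> ~ share f g -> ~ common_nbr e f g)].

End Coloring.

Definition has_good_coloring (T : finType) (e : rel T) : Prop :=
  exists c : {set T} -> color, good_coloring e c.

(* Main.v *)
Require Import Defs.
From HB Require Import structures.
From mathcomp Require Import all_boot all_order all_algebra.
Import Order.TTheory GRing.Theory Num.Theory.
From Stdlib Require Import Classical_Prop.
Set Implicit Arguments. Unset Strict Implicit. Unset Printing Implicit Defensive.
Set Bullet Behavior "Strict Subproofs".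

Definition is2 (k : color) : bool := match k with C2a | C2b => true | _ => false end.
Definition sw (k : color) : color :=
  match k with C2a => C2b | C2b => C2a | k => k end.
Definition opp1 (k : color) : color := match k with C1a => C1b | _ => C1a end.

Lemma sw_inj k1 k2 : sw k1 = sw k2 -> k1 = k2.
Proof. by case: k1; case: k2. Qed.
Lemma sw_is2 k : is2 (sw k) = is2 k.
Proof. by case: k. Qed.
Lemma sw_id1 k : ~~ is2 k -> sw k = k.
Proof. by case: k. Qed.
Lemma is2_ne k1 k2 : is2 k1 -> is2 k2 -> k1 <> k2 -> k1 = sw k2.
Proof. by case: k1; case: k2. Qed.
Lemma sw_ne k : is2 k -> k <> sw k.
Proof. by case: k. Qed.

Section Gen.
Variable T : finType.

Definition P1 (e : rel T) (c : {set T} -> color) := forall f g,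
  f \in edges e -> g \in edges e -> f != g -> ~~ is2 (c f) -> c f = c g -> ~ share f g.
Definition P2 (e : rel T) (c : {set T} -> color) := forall f g,
  f \in edges e -> g \in edges e -> f != g -> is2 (c f) -> is2 (c g) ->
  [/\ ~ share f g, (c f = c g -> ~ joined e f g) & (c f <> c g -> ~ common_nbr e f g)].

Lemma share_sym (f g : {set T}) : share f g -> share g f.
Proof. by case=> z [? ?]; exists z. Qed.

Lemma joined_sym e (f g : {set T}) : symmetric e -> joined e f g -> joined e g f.
Proof. by move=> es [u [v [? ? ?]]]; exists v, u; split => //; rewrite es. Qed.

Lemma cn_sym e (f g : {set T}) : symmetric e -> common_nbr e f g -> common_nbr e g f.
Proof. by move=> es [u [v [w [? ? ? ?]]]]; exists v, u, w; split => //; rewrite es. Qed.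

Lemma edge_inv e (f : {set T}) : f \in edges e -> exists u v, e u v /\ f = [set u; v].
Proof.
by rewrite inE => /existsP[u /existsP[v /andP[euv /eqP ->]]]; exists u, v.
Qed.

Lemma joined_cn e (f g : {set T}) : symmetric e -> g \in edges e -> joined e f g -> common_nbr e f g.
Proof.
move=> es /edge_inv[p [q [epq ->]]] [u [v [uf]]].
rewrite !inE => /orP[] /eqP -> euv.
- by exists u, q, p; split => //; rewrite !inE eqxx orbT.
- by exists u, p, q; split => //; rewrite ?inE ?eqxx // es.
Qed.

Lemma good_of_P e c : P1 e c -> P2 e c -> good_coloring e c.
Proof.
move=> H1 H2; split; first split.
- by move=> f g fe ge fg cf cg; apply: H1 => //; rewrite ?cf ?cg.
- by move=> f g fe ge fg cf cg; apply: H1 => //; rewrite ?cf ?cg.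
- move=> f g fe ge fg cf cg; have [] := H2 f g fe ge fg; rewrite ?cf ?cg //.
  move=> ns j _; split => //; apply: j; congruence.
- move=> f g fe ge fg cf cg; have [] := H2 f g fe ge fg; rewrite ?cf ?cg //.
  move=> ns j _; split => //; apply: j; congruence.
- move=> f g fe ge cf cg; have fg : f != g.
    by apply/eqP => E; subst; rewrite cf in cg.
  by have [] := H2 f g fe ge fg; rewrite ?cf ?cg.
- move=> f g fe ge cf cg _; have fg : f != g.
    by apply/eqP => E; subst; rewrite cf in cg.
  have [] := H2 f g fe ge fg; rewrite ?cf ?cg // => _ _; apply; congruence.
Qed.

Lemma P_of_good e c : symmetric e -> good_coloring e c -> P1 e c /\ P2 e c.
Proof.
move=> es [[m1 m2 i1 i2] hI hII]; split.
- move=> f g fe ge fg; case E: (c f) => // _ E2.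
  + by apply: (m1 f g) => //; rewrite -E2.
  + by apply: (m2 f g) => //; rewrite -E2.
- move=> f g fe ge fg; case Ef: (c f) => //; case Eg: (c g) => // _ _.
  + by have [? ?] := i1 f g fe ge fg Ef Eg; split.
  + split; first exact: hI.
    * by [].
    * move=> _; apply: hII => //; exact: hI.
  + split; first by move/share_sym; apply: hI.
    * by [].
    * move=> _ /(cn_sym es); apply: hII => //; exact: hI.
  + by have [? ?] := i2 f g fe ge fg Ef Eg; split.
Qed.

Definition nearb (e : rel T) (f g : {set T}) : bool :=
  [exists u, [exists v, [&& u \in f, v \in g &
     [|| u == v, e u v | [exists w, e u w && e w v]]]]].

Lemma nearb_of e f g : share f g \/ joined e f g \/ common_nbr e f g -> nearb e f g.
Proof.
case=> [[z [zf zg]]|[[u [v [uf vg euv]]]|[u [v [w [uf vg euw ewv]]]]]];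
  apply/existsP.
- by exists z; apply/existsP; exists z; rewrite zf zg eqxx.
- by exists u; apply/existsP; exists v; rewrite uf vg euv orbT.
- exists u; apply/existsP; exists v; rewrite uf vg; apply/and3P; split => //.
  by apply/orP; right; apply/orP; right; apply/existsP; exists w; rewrite euw ewv.
Qed.

Lemma nearb_inv e f g : symmetric e -> g \in edges e -> nearb e f g ->
  share f g \/ common_nbr e f g.
Proof.
move=> es ge /existsP[u /existsP[v /and3P[uf vg /or3P[/eqP E|euv|/existsP[w /andP[h1 h2]]]]]].
- by left; exists u; subst.
- by right; apply: joined_cn => //; exists u, v.
- by right; exists u, v, w.
Qed.

Section Swap.
Variables (e : rel T) (es : symmetric e) (phi : {set T} -> color).
Hypotheses (H1 : P1 e phi) (H2 : P2 e phi).
Variable g1 : {set T}.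

Definition rr : rel {set T} := fun f g =>
  [&& f \in edges e, g \in edges e, is2 (phi f), is2 (phi g) & nearb e f g || nearb e g f].
Definition SS := [set g | connect rr g1 g].
Definition phi' f := if f \in SS then sw (phi f) else phi f.

Lemma rr_sym f g : rr f g -> rr g f.
Proof. by case/and5P => ? ? ? ? ?; rewrite /rr; apply/and5P; split => //; rewrite orbC. Qed.

Lemma rr_col f g : rr f g -> phi f = phi g.
Proof.
case/and5P=> fe ge pf pg n.
have [->|fg] := eqVneq f g; first by [].
have [ns _ ncn] := H2 fe ge fg pf pg.
apply: NNPP => ne; have {}ncn := ncn ne.
case/orP: n => /(nearb_inv es) => [/(_ ge)|/(_ fe)] [].
- by [].
- by [].
- by move/share_sym.
- by move/(cn_sym es).
Qed.

Lemma SS_col g : g \in SS -> phi g = phi g1.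
Proof.
rewrite inE => /connectP[p pp ->].
elim: p g1 pp => //= h p IH s /andP[r1 pp].
by rewrite IH // (rr_col r1).
Qed.

Lemma SS_closed f g : f \in SS -> rr f g -> g \in SS.
Proof. by rewrite !inE => cf r1; apply: connect_trans cf (connect1 r1). Qed.

Lemma phi'_1 f : ~~ is2 (phi f) -> phi' f = phi f.
Proof. by rewrite /phi'; case: ifP => // _; apply: sw_id1. Qed.

Lemma phi'_is2 f : is2 (phi' f) = is2 (phi f).
Proof. by rewrite /phi'; case: ifP => // _; rewrite sw_is2. Qed.

Lemma swapP1 : P1 e phi'.
Proof.
move=> f g fe ge fg; rewrite phi'_is2 => h1 E.
have h2 : ~~ is2 (phi g) by rewrite -phi'_is2 -E phi'_is2.
apply: H1 => //; by rewrite -(phi'_1 h1) -(phi'_1 h2).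
Qed.

Lemma swapP2 : P2 e phi'.
Proof.
move=> f g fe ge fg; rewrite !phi'_is2 => pf pg.
have [ns nj ncn] := H2 fe ge fg pf pg.
have rfg : share f g \/ joined e f g \/ common_nbr e f g -> rr f g.
  by move=> h; apply/and5P; split => //; rewrite nearb_of.
rewrite /phi'; case: ifP => fS; case: ifP => gS.
- split => //; first by move/sw_inj.
  by move=> h; apply: ncn => E; apply: h; rewrite E.
- have K : ~ (share f g \/ joined e f g \/ common_nbr e f g).
    by move/rfg/(SS_closed fS); rewrite gS.
  split => [?|_ ?|_ ?]; apply: K; tauto.
- have K : ~ (share f g \/ joined e f g \/ common_nbr e f g).
    by move/rfg/rr_sym/(SS_closed gS); rewrite fS.
  split => [?|_ ?|_ ?]; apply: K; tauto.
- by split.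
Qed.

End Swap.

Lemma swap_lemma e (es : symmetric e) phi (x y : T) :
  P1 e phi -> P2 e phi ->
  exists phi2, [/\ P1 e phi2, P2 e phi2, (forall f, ~~ is2 (phi f) -> phi2 f = phi f) &
    exists t, is2 t /\ forall g, g \in edges e -> (x \in g \/ y \in g) ->
       is2 (phi2 g) -> phi2 g = t].
Proof.
move=> H1 H2.
pose Q k := exists g, [/\ g \in edges e, (x \in g \/ y \in g) & phi g = k].
have [Qa|nQa] := classic (Q C2a); last first.
  exists phi; split => //; exists C2b; split => // g ge gt.
  case E: (phi g) => //; by case: nQa; exists g.
have [Qb|nQb] := classic (Q C2b); last first.
  exists phi; split => //; exists C2a; split => // g ge gt.
  case E: (phi g) => //; by case: nQb; exists g.
case: Qa => ga [gae gat gac]; case: Qb => gb [gbe gbt gbc].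
have gab : ga != gb by apply/eqP => E; subst; rewrite gac in gbc.
have pa : is2 (phi ga) by rewrite gac.
have pb : is2 (phi gb) by rewrite gbc.
have [nsab _ _] := H2 ga gb gae gbe gab pa pb.
exists (phi' e phi ga); split.
- exact: swapP1.
- exact: swapP2.
- exact: phi'_1.
- exists C2b; split => // g ge gt.
rewrite phi'_is2 /phi'; case: ifP => gS.
  by rewrite (SS_col es H2 gS) gac.
case E: (phi g) => // _.
have pg : is2 (phi g) by rewrite E.
have gga : g != ga by apply/eqP => Eq; subst; rewrite inE connect0 in gS.
have ggb : g != gb by apply/eqP => Eq; subst; rewrite gbc in E.
have shg : share g ga \/ share g gb.
  case: gt => [zg|zg]; case: gat => za; case: gbt => zb;
    solve [by left; exists x | by left; exists y | by right; exists x | by right; exists y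
          | by case: nsab; exists x | by case: nsab; exists y].
case: shg => sh.
  + by have [] := H2 g ga ge gae gga pg pa.
  + by have [] := H2 g gb ge gbe ggb pg pb.
Qed.

End Gen.

Section Ext.
Variables (T : finType) (e : rel T) (a b c d x y : T).
Hypotheses (es : symmetric e) (ei : irreflexive e).
Hypotheses (eab : e a b) (ebc : e b c) (ecd : e c d) (eax : e a x) (edy : e d y).
Hypotheses (nab : a != b) (nac : a != c) (nad : a != d) (nbc : b != c) (nbd : b != d)
  (ncd : c != d) (nxb : x != b) (nyc : y != c).
Hypotheses (Na : forall z, e a z -> z = x \/ z = b) (Nb : forall z, e b z -> z = a \/ z = c)
  (Nc : forall z, e c z -> z = b \/ z = d) (Nd : forall z, e d z -> z = c \/ z = y).

Definition newpair (u v : T) : bool :=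
  [|| (u == a) && (v == b), (u == b) && (v == a), (u == b) && (v == c),
      (u == c) && (v == b), (u == c) && (v == d) | (u == d) && (v == c)].

Lemma newpairE u v : newpair u v ->
  (u = a /\ v = b) \/ (u = b /\ v = a) \/ (u = b /\ v = c) \/ (u = c /\ v = b) \/
      (u = c /\ v = d) \/ (u = d /\ v = c).
Proof.
rewrite /newpair.
by do ![case/orP => [/andP[/eqP-> /eqP->]|]; first tauto]; case/andP => /eqP-> /eqP->; tauto.
Qed.

Lemma newpair_sym u v : newpair u v = newpair v u.
Proof.
by apply/idP/idP => /newpairE [[-> ->]|[[-> ->]|[[-> ->]|[[-> ->]|[[-> ->]|[-> ->]]]]]];
  rewrite /newpair !eqxx ?orbT.
Qed.

Definition e0 : rel T := fun u v => e u v && ~~ newpair u v.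

Lemma e0_sym : symmetric e0.
Proof. by move=> u v; rewrite /e0 es newpair_sym. Qed.
Lemma e0_irr : irreflexive e0.
Proof. by move=> u; rewrite /e0 ei. Qed.
Lemma e0_sub u v : e0 u v -> e u v.
Proof. by case/andP. Qed.

Lemma edges_sub : edges e0 \subset edges e.
Proof.
apply/subsetP => f /edge_inv[u [v [/e0_sub h ->]]].
by rewrite inE; apply/existsP; exists u; apply/existsP; exists v; rewrite h eqxx.
Qed.

Lemma old_nob f : f \in edges e0 -> b \notin f /\ c \notin f.
Proof.
case/edge_inv => u [v [/andP[euv np] ->]]; rewrite !inE.
have K : forall z, (z == b) || (z == c) -> ~~ ((z == u) || (z == v)).
{ move=> z /orP[]/eqP -> ; apply/negP; case/orP => /eqP E; subst.
  - by case: (Nb euv) => E; subst; rewrite /newpair !eqxx ?orbT in np.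
  - by move: euv; rewrite es => /Nb [] E; subst; rewrite /newpair !eqxx ?orbT in np.
  - by case: (Nc euv) => E; subst; rewrite /newpair !eqxx ?orbT in np.
  - by move: euv; rewrite es => /Nc [] E; subst; rewrite /newpair !eqxx ?orbT in np. }
by split; apply: K; rewrite eqxx ?orbT.
Qed.

Definition Eab := [set a; b].
Definition Ebc := [set b; c].
Definition Ecd := [set c; d].
Definition Exa := [set a; x].
Definition Edy := [set d; y].

Lemma in_edges u v : e u v -> [set u; v] \in edges e.
Proof. by move=> h; rewrite inE; apply/existsP; exists u; apply/existsP; exists v; rewrite h eqxx. Qed.

Lemma in_edges0 u v : e0 u v -> [set u; v] \in edges e0.
Proof. by move=> h; rewrite inE; apply/existsP; exists u; apply/existsP; exists v; rewrite h eqxx. Qed.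

Lemma edges_split f : f \in edges e ->
  [\/ f \in edges e0, f = Eab, f = Ebc | f = Ecd].
Proof.
case/edge_inv => u [v [euv ->]].
case np: (newpair u v); last by constructor 1; apply: in_edges0; rewrite /e0 euv np.
case/newpairE: np => [[-> ->]|[[-> ->]|[[-> ->]|[[-> ->]|[[-> ->]|[-> ->]]]]]];
  rewrite /Eab /Ebc /Ecd ?[[set b; a]]setUC ?[[set c; b]]setUC ?[[set d; c]]setUC;
  by [constructor 2 | constructor 3 | constructor 4].
Qed.

Lemma Exa_old : Exa \in edges e0.
Proof.
apply: in_edges0; rewrite /e0 eax /newpair.
by rewrite !eqxx (negbTE nxb) (negbTE nab) (negbTE nac) (negbTE nad) /= ?andbF.
Qed.

Lemma Edy_old : Edy \in edges e0.
Proof.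
apply: in_edges0; rewrite /e0 edy /newpair.
have nda : d != a by rewrite eq_sym.
have ndb : d != b by rewrite eq_sym.
have ndc : d != c by rewrite eq_sym.
by rewrite !eqxx (negbTE nyc) (negbTE nda) (negbTE ndb) (negbTE ndc) /= ?andbF.
Qed.

Lemma at_vertex v p q f : (forall z, e v z -> z = p \/ z = q) -> f \in edges e ->
  v \in f -> f = [set v; p] \/ f = [set v; q].
Proof.
move=> Nv /edge_inv[u [w [euw ->]]]; rewrite !inE => /orP[]/eqP E; subst.
- by case: (Nv _ euw) => ->; tauto.
- by move: euw; rewrite es => /Nv [] ->; rewrite setUC; tauto.
Qed.


Ltac contra_in := match goal with
  | H : is_true (?z \in ?f), H' : is_true (?z \notin ?f) |- _ => by rewrite H in H'
  end.

Lemma joined_tr f g : f \in edges e0 -> g \in edges e0 -> joined e f g -> joined e0 f g.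
Proof.
move=> fo go [u [v [uf vg euv]]]; exists u, v; split => //.
rewrite /e0 euv; apply/negP => np.
have [nbf ncf] := old_nob fo; have [nbg ncg] := old_nob go.
move: uf vg euv.
by case/newpairE: np => [[-> ->]|[[-> ->]|[[-> ->]|[[-> ->]|[[-> ->]|[-> ->]]]]]] uf vg _;
  contra_in.
Qed.

Lemma cn_tr f g : f \in edges e0 -> g \in edges e0 -> ~ share f g ->
  common_nbr e f g -> common_nbr e0 f g.
Proof.
move=> fo go nsh [u [v [w [uf vg euw ewv]]]]; exists u, v, w.
have [nbf ncf] := old_nob fo; have [nbg ncg] := old_nob go.
split => //; rewrite /e0 ?euw ?ewv /=; apply/negP => np; move: uf vg euw ewv.
- case/newpairE: np => [[-> ->]|[[-> ->]|[[-> ->]|[[-> ->]|[[-> ->]|[-> ->]]]]]] uf vg euw ewv;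
    try contra_in.
  + by case: (Nb ewv) => E; subst; [apply: nsh; exists a | contra_in].
  + by case: (Nc ewv) => E; subst; [contra_in | apply: nsh; exists d].
- case/newpairE: np => [[-> ->]|[[-> ->]|[[-> ->]|[[-> ->]|[[-> ->]|[-> ->]]]]]] uf vg euw ewv;
    try contra_in.
  + by move: euw; rewrite es => /Nb [] E; subst; [apply: nsh; exists a | contra_in].
  + by move: euw; rewrite es => /Nc [] E; subst; [contra_in | apply: nsh; exists d].
Qed.

Lemma old_ne f : f \in edges e0 -> [/\ f != Eab, f != Ebc & f != Ecd].
Proof.
move=> fo; have [nbf ncf] := old_nob fo.
by split; apply/eqP => E; subst; rewrite !inE eqxx ?orbT in nbf ncf.
Qed.

Lemma bc_ne_ab : Ebc != Eab.
Proof. apply/eqP => E; have : a \in Ebc by rewrite E !inE eqxx.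
by rewrite !inE (negbTE nab) (negbTE nac). Qed.
Lemma cd_ne_ab : Ecd != Eab.
Proof. apply/eqP => E; have : a \in Ecd by rewrite E !inE eqxx.
by rewrite !inE (negbTE nac) (negbTE nad). Qed.
Lemma cd_ne_bc : Ecd != Ebc.
Proof. apply/eqP => E; have : b \in Ecd by rewrite E !inE eqxx ?orbT.
by rewrite !inE (negbTE nbc) (negbTE nbd). Qed.

Definition col (phi : {set T} -> color) (k1 k2 k3 : color) (f : {set T}) : color :=
  if f == Eab then k1 else if f == Ebc then k2 else if f == Ecd then k3 else phi f.

Lemma col_ab phi k1 k2 k3 : col phi k1 k2 k3 Eab = k1.
Proof. by rewrite /col eqxx. Qed.
Lemma col_bc phi k1 k2 k3 : col phi k1 k2 k3 Ebc = k2.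
Proof. by rewrite /col (negbTE bc_ne_ab) eqxx. Qed.
Lemma col_cd phi k1 k2 k3 : col phi k1 k2 k3 Ecd = k3.
Proof. by rewrite /col (negbTE cd_ne_ab) (negbTE cd_ne_bc) eqxx. Qed.
Lemma col_old phi k1 k2 k3 f : f \in edges e0 -> col phi k1 k2 k3 f = phi f.
Proof. by case/old_ne => h1 h2 h3; rewrite /col (negbTE h1) (negbTE h2) (negbTE h3). Qed.

Lemma old_a g : g \in edges e0 -> a \in g -> g = Exa.
Proof.
move=> go ag; have [nbg _] := old_nob go.
case: (at_vertex Na (subsetP edges_sub _ go) ag) => // E.
by rewrite E !inE eqxx orbT in nbg.
Qed.

Lemma old_d g : g \in edges e0 -> d \in g -> g = Edy.
Proof.
move=> go dg; have [_ ncg] := old_nob go.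
case: (at_vertex Nd (subsetP edges_sub _ go) dg) => // E.
by rewrite E !inE eqxx orbT in ncg.
Qed.

Lemma bc_far g : g \in edges e0 -> a \notin g -> d \notin g ->
  ~ joined e Ebc g /\ (common_nbr e Ebc g -> x \in g \/ y \in g).
Proof.
move=> go nag ndg; have [nbg ncg] := old_nob go.
split.
- move=> [u [v [+ vg euv]]]; rewrite !inE => /orP[]/eqP E; subst.
  + by case: (Nb euv) => E; subst; contra_in.
  + by case: (Nc euv) => E; subst; contra_in.
- move=> [u [v [w [+ vg euw ewv]]]]; rewrite !inE => /orP[]/eqP E; subst.
  + case: (Nb euw) => E; subst.
    * by case: (Na ewv) => E; subst; [left | contra_in].
    * by case: (Nc ewv) => E; subst; contra_in.
  + case: (Nc euw) => E; subst.
    * by case: (Nb ewv) => E; subst; contra_in.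
    * by case: (Nd ewv) => E; subst; [contra_in | right].
Qed.

Lemma extend phi k1 k2 k3 :
  P1 e0 phi -> P2 e0 phi -> ~~ is2 k1 -> ~~ is2 k3 -> k1 <> phi Exa -> k3 <> phi Edy ->
  k1 <> k2 -> k3 <> k2 ->
  (~~ is2 k2 \/ [/\ ~~ is2 (phi Exa), ~~ is2 (phi Edy) &
      forall g, g \in edges e0 -> x \in g \/ y \in g -> phi g <> sw k2]) ->
  P1 e (col phi k1 k2 k3) /\ P2 e (col phi k1 k2 k3).
Proof.
move=> H1 H2 i1 i3 n1 n3 n12 n32 hk.
set C := col phi k1 k2 k3.
have Cab : C Eab = k1 by apply: col_ab.
have Cbc : C Ebc = k2 by apply: col_bc.
have Ccd : C Ecd = k3 by apply: col_cd.
have Cold : forall f, f \in edges e0 -> C f = phi f by move=> f; apply: col_old.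
have Exa_o := Exa_old; have Edy_o := Edy_old.
have P1new : forall f g, (f = Eab \/ f = Ebc \/ f = Ecd) -> g \in edges e -> f != g ->
    C f = C g -> share f g -> False.
{ move=> f g hf ge fg E [z [zf zg]].
  case: hf => [Ef|[Ef|Ef]]; subst f; rewrite !inE in zf; case/orP: zf => /eqP Ez; subst z.
  - case: (at_vertex Na ge zg) => Eg; subst g; last by rewrite eqxx in fg.
    by change [set a; x] with Exa in E; rewrite Cab (Cold _ Exa_o) in E.
  - case: (at_vertex Nb ge zg) => Eg; subst g.
    + by rewrite setUC eqxx in fg.
    + by change [set b; c] with Ebc in E; rewrite Cab Cbc in E.
  - case: (at_vertex Nb ge zg) => Eg; subst g.
    + by rewrite setUC in E; change [set a; b] with Eab in E; rewrite Cab Cbc in E; apply: n12.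
    + by rewrite eqxx in fg.
  - case: (at_vertex Nc ge zg) => Eg; subst g.
    + by rewrite setUC eqxx in fg.
    + by change [set c; d] with Ecd in E; rewrite Ccd Cbc in E; apply: n32.
  - case: (at_vertex Nc ge zg) => Eg; subst g.
    + by rewrite setUC in E; change [set b; c] with Ebc in E; rewrite Ccd Cbc in E.
    + by rewrite eqxx in fg.
  - case: (at_vertex Nd ge zg) => Eg; subst g.
    + by rewrite setUC eqxx in fg.
    + by change [set d; y] with Edy in E; rewrite Ccd (Cold _ Edy_o) in E. }
have BC : forall g, g \in edges e0 -> is2 (phi g) -> is2 k2 ->
    [/\ ~ share Ebc g, (k2 = phi g -> ~ joined e Ebc g) & (k2 <> phi g -> ~ common_nbr e Ebc g)].
{ move=> g go pg p2.
  have [ia iy hxy] : [/\ ~~ is2 (phi Exa), ~~ is2 (phi Edy) &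
      forall g, g \in edges e0 -> x \in g \/ y \in g -> phi g <> sw k2].
    by case: hk => // h; rewrite p2 in h.
  have nag : a \notin g.
    by apply/negP => ag; move: pg; rewrite (old_a go ag) (negbTE ia).
  have ndg : d \notin g.
    by apply/negP => dg; move: pg; rewrite (old_d go dg) (negbTE iy).
  have [nj cnxy] := bc_far go nag ndg.
  have [nbg ncg] := old_nob go.
  split => //.
  - by move=> [z [+ zg]]; rewrite !inE => /orP[]/eqP E; subst z; contra_in.
  - move=> ne hcn; apply: (hxy g go (cnxy hcn)).
    by apply: is2_ne => // E; apply: ne. }
split.
- move=> f g fe ge fg i E sh.
  case: (edges_split fe) => [fo|hf|hf|hf]; try by apply: (P1new f g) => //; tauto.
  case: (edges_split ge) => [go|hg|hg|hg].
  1: by apply: (H1 f g fo go fg) => //; rewrite -?(Cold _ fo) -?(Cold _ go).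
  all: apply: (P1new g f _ fe); first [tauto | by rewrite eq_sym | by rewrite E | by apply: share_sym].
- move=> f g fe ge fg pf pg.
  have NE : forall h, h = Eab \/ h = Ecd -> is2 (C h) -> False.
    by move=> h [->|->]; rewrite ?Cab ?Ccd ?(negbTE i1) ?(negbTE i3).
  case: (edges_split fe) => [fo|Ef|Ef|Ef];
    [ | by case: (NE f (or_introl Ef) pf) | | by case: (NE f (or_intror Ef) pf)].
  + case: (edges_split ge) => [go|Eg|Eg|Eg];
      [ | by case: (NE g (or_introl Eg) pg) | | by case: (NE g (or_intror Eg) pg)].
    * rewrite (Cold _ fo) in pf; rewrite (Cold _ go) in pg.
      have [ns nj ncn] := H2 f g fo go fg pf pg.
      rewrite (Cold _ fo) (Cold _ go); split => //.
      -- by move=> E j; apply: (nj E); apply: joined_tr.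
      -- by move=> ne hcn; apply: (ncn ne); apply: cn_tr.
    * rewrite Eg Cbc in pg *; rewrite (Cold _ fo) in pf *.
      have [ns nj ncn] := BC f fo pf pg.
      split.
      -- by move/share_sym.
      -- by move=> E /(joined_sym es); apply: nj.
      -- by move=> E /(cn_sym es); apply: ncn => E'; apply: E.
  + rewrite Ef Cbc in pf fg *.
    case: (edges_split ge) => [go|Eg|Eg|Eg];
      [ | by case: (NE g (or_introl Eg) pg) | | by case: (NE g (or_intror Eg) pg)].
    * by rewrite (Cold _ go) in pg *; apply: BC.
    * by rewrite Eg eqxx in fg.
Qed.

Lemma e0_card : #|edges e0| < #|edges e|.
Proof.
apply: proper_card; apply/properP; split; first exact: edges_sub.
exists Ebc; first exact: in_edges.
by apply/negP => /old_nob [] /negP; rewrite !inE eqxx.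
Qed.

Lemma ext_good : has_good_coloring e0 -> has_good_coloring e.
Proof.
case=> phi0 g0; have [H1 H2] := P_of_good e0_sym g0.
have Exa_o := Exa_old; have Edy_o := Edy_old.
have choice : (exists g, [/\ ~~ is2 g, g <> phi0 Exa & g <> phi0 Edy]) \/
   [/\ ~~ is2 (phi0 Exa), ~~ is2 (phi0 Edy) & phi0 Exa <> phi0 Edy].
  case: (phi0 Exa); case: (phi0 Edy);
    solve [by right | by left; exists C1a | by left; exists C1b].
case: choice => [[g [ig na nb]]|[ia ib nab']].
- exists (col phi0 g (opp1 g) g).
  have [Q1 Q2] : P1 e (col phi0 g (opp1 g) g) /\ P2 e (col phi0 g (opp1 g) g).
    apply: extend => //; try by case: (g) ig.
    by left; case: (g) ig.
  exact: good_of_P.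
- have [phi2 [Q1 Q2 Q3 [t [it Ht]]]] := swap_lemma e0_sym x y H1 H2.
  have E1 : phi2 Exa = phi0 Exa by apply: Q3.
  have E2 : phi2 Edy = phi0 Edy by apply: Q3.
  exists (col phi2 (phi0 Edy) t (phi0 Exa)).
  have [R1 R2] : P1 e (col phi2 (phi0 Edy) t (phi0 Exa)) /\
                 P2 e (col phi2 (phi0 Edy) t (phi0 Exa)).
    apply: extend => //; rewrite ?E1 ?E2 //.
    + by move=> E; apply: nab'.
    + by move=> E; move: ib; rewrite E it.
    + by move=> E; move: ia; rewrite E it.
    + right; split; rewrite ?E1 ?E2 // => g go gt.
      case p: (is2 (phi2 g)).
      * by rewrite (Ht g go gt p); apply: sw_ne.
      * by move=> E; move: p; rewrite E sw_is2 it.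
  + exact: good_of_P.
Qed.

End Ext.


Lemma deg2_nbrs (T : finType) (e : rel T) v p q : deg e v = 2 -> e v p -> e v q -> p != q ->
  forall z, e v z -> z = p \/ z = q.
Proof.
move=> dv ep eq npq z ez.
have sub : [set p; q] \subset [set y | e v y].
  by apply/subsetP => w; rewrite !inE => /orP[]/eqP ->.
have : [set p; q] == [set y | e v y].
  by rewrite eqEcard sub /= cards2 npq; move: dv; rewrite /deg => ->.
move/eqP => E; have : z \in [set y | e v y] by rewrite inE.
by rewrite -E !inE => /orP[]/eqP ->; [left|right].
Qed.

Lemma deg2_other (T : finType) (e : rel T) v p : deg e v = 2 -> e v p ->
  exists q, q != p /\ e v q.
Proof.
rewrite /deg => /eqP /cards2P [u1 [u2 [n12 E]]] ep.
have : p \in [set y | e v y] by rewrite inE.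
have hu1 : e v u1.
  have : u1 \in [set y | e v y] by rewrite E !inE eqxx.
  by rewrite inE.
have hu2 : e v u2.
  have : u2 \in [set y | e v y] by rewrite E !inE eqxx orbT.
  by rewrite inE.
rewrite E !inE => /orP[]/eqP ->.
- by exists u2; rewrite eq_sym n12.
- by exists u1.
Qed.

Lemma mad_mono (T : finType) (e e' : rel T) : edges e' \subset edges e -> (mad e' <= mad e)%R.
Proof.
move=> sub; rewrite /mad; apply: le_bigmax2 => S _.
apply: bigmax_le.
- elim/big_ind: _ => //.
  + by move=> u v hu hv; rewrite le_max hu.
  + by move=> F _; rewrite divr_ge0 // ler0n.
- move=> F hF; apply: (bigmax_sup F) => //.
  by apply: subset_trans hF _; apply: setSI.
Qed.

Lemma deg_mono (T : finType) (e e' : rel T) z : (forall u v, e' u v -> e u v) ->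
  deg e' z <= deg e z.
Proof.
move=> h; apply: subset_leq_card; apply/subsetP => w; rewrite !inE; exact: h.
Qed.

Theorem lemma7 (T : finType) (e : rel T)
  (Hsimple : simple_graph e) (Hsub : subcubic e)
  (Hmad : (mad e < 20%:R / 9%:R)%R)
  (Hbad : ~ has_good_coloring e)
  (Hmin : forall (T' : finType) (e' : rel T'),
      simple_graph e' -> subcubic e' -> (mad e' < 20%:R / 9%:R)%R ->
      ~ has_good_coloring e' ->
      #|T| + #|edges e| <= #|T'| + #|edges e'|) :
  ~ exists a b c d : T,
      [/\ uniq [:: a; b; c; d], e a b, e b c & e c d] /\
      [/\ deg e a = 2, deg e b = 2, deg e c = 2 & deg e d = 2].
Proof.
case=> a [b [c [d [[Hu eab ebc ecd] [da db dc dd]]]]].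
case: Hsimple => es ei.
move: Hu => /= /and4P[].
rewrite !inE !negb_or => /and3P[nab nac nad] /andP[nbc nbd] ncd _.
have eba : e b a by rewrite es.
have ecb : e c b by rewrite es.
have edc : e d c by rewrite es.
have [x [nxb eax]] := deg2_other da eab.
have [y [nyc edy]] := deg2_other dd edc.
have Na := deg2_nbrs da eax eab nxb.
have Nb := deg2_nbrs db eba ebc nac.
have Nc := deg2_nbrs dc ecb ecd nbd.
have ncy : c != y by rewrite eq_sym.
have Nd := deg2_nbrs dd edc edy ncy.
set e' := e0 e a b c d.
have Hg := ext_good es eax edy nab nac nad nbc nbd ncd nxb nyc Na Nb Nc Nd.
have Hc := e0_card es ebc Nb Nc.
have sub' : forall u v, e' u v -> e u v by move=> u v /andP[].
have s0 : symmetric e' by apply: e0_sym.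
have i0 : irreflexive e' by apply: e0_irr.
have ms : edges e' \subset edges e by apply: edges_sub.
have := Hmin T e' (conj s0 i0).
have sc : subcubic e' by move=> z; apply: leq_trans (Hsub z); apply: deg_mono.
have md : (mad e' < 20%:R / 9%:R)%R by apply: le_lt_trans Hmad; apply: mad_mono.
move=> /(_ sc md (fun g => Hbad (Hg g))).
by rewrite leq_add2l leqNgt Hc.
Qed.
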